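(* Let $m\geq 4$, let $\mathcal{S}$ be a locating-dominating set of the grid graph $G_{2,m}=P_2\square P_m$, and let $\mathcal{B}$ be a $(2\times 4)$-block of $G_{2,m}$. Then $|\mathcal{B}\cap\mathcal{S}|\geq 2$.
   Context: $P_n$ is the path on $n$ vertices, $\square$ the Cartesian product of graphs, and $G_{n,m}=P_n\square P_m$ is viewed as a grid with $n$ rows and $m$ columns. A $(n\times \ell)$-block of $G_{n,m}$ ($1\le\ell\le m$) is the induced subgraph (or its vertex set) consisting of $\ell$ consecutive columns. For $C\subseteq V(G)$ and $v\in V(G)$ let $I(v)=N[v]\cap C$ ($N[v]$ the closed neighborhood). $C$ is a locating-dominating set if $I(v)\neq\emptyset$ for all $v\in V(G)\setminus C$ and $I(u)\neq I(v)$ for all distinct $u,v\in V(G)\setminus C$. *)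

(* Defs.v *)
From mathcomp Require Import all_boot.
Set Implicit Arguments. Unset Strict Implicit. Unset Printing Implicit Defensive.

(* Grid graph G_{n,m} = P_n [] P_m, vertex (i,j) : row i, column j. *)
Definition grid_adj (n m : nat) (u v : 'I_n * 'I_m) : bool :=
  ((u.1 == v.1) && ((u.2.+1 == v.2 :> nat) || (v.2.+1 == u.2 :> nat)))
  || ((u.2 == v.2) && ((u.1.+1 == v.1 :> nat) || (v.1.+1 == u.1 :> nat))).

Definition closed_nbhd (n m : nat) (v : 'I_n * 'I_m) : {set 'I_n * 'I_m} :=
  [set u | (u == v) || grid_adj v u].

Definition I_code (n m : nat) (C : {set 'I_n * 'I_m}) (v : 'I_n * 'I_m) :=
  closed_nbhd v :&: C.

Definition locating_dominating (n m : nat) (C : {set 'I_n * 'I_m}) : Prop :=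
  (forall v, v \notin C -> I_code C v != set0) /\
  (forall u v, u \notin C -> v \notin C -> u != v -> I_code C u != I_code C v).

Definition block (n m : nat) (j l : nat) : {set 'I_n * 'I_m} :=
  [set v : 'I_n * 'I_m | (j <= v.2) && (v.2 < j + l)].

(* Main.v *)
Require Import Defs.
From mathcomp Require Import all_boot.
From mathcomp Require Import zify.

Lemma nb_sub m j (v : 'I_2 * 'I_m) : j < v.2 -> v.2 < j + 3 ->
  closed_nbhd v \subset block 2 m j 4.
Proof.
case: v => [v1 v2] /= H1 H2; apply/subsetP => -[u1 u2].
rewrite !inE /grid_adj /=.
case/orP => [/eqP[_ ->]|/orP[/andP[_ /orP[/eqP E|/eqP E]]|/andP[/eqP E _]]];
  try subst; apply/andP; split; lia.
Qed.

Lemma eq_small (T : finType) (X Z Y : {set T}) :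
  X \subset Y -> Z \subset Y -> #|Y| <= 1 -> X != set0 -> Z != set0 -> X = Z.
Proof.
move=> XY ZY cY X0 Z0.
have cX : 0 < #|X| by rewrite card_gt0.
have cZ : 0 < #|Z| by rewrite card_gt0.
have eX : X = Y by apply/eqP; rewrite eqEcard XY; apply: leq_trans cY cX.
have eZ : Z = Y by apply/eqP; rewrite eqEcard ZY; apply: leq_trans cY cZ.
by rewrite eX eZ.
Qed.

Theorem lemma4p3 (m : nat) (S : {set 'I_2 * 'I_m}) (j : nat) :
  4 <= m -> locating_dominating S -> j + 4 <= m ->
  2 <= #|block 2 m j 4 :&: S|.
Proof.
move=> _ [Hdom Hloc] Hj.
rewrite leqNgt; apply/negP => Hc.
have Hc1 : #|block 2 m j 4 :&: S| <= 1 by [].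
have h1 : j + 1 < m by lia.
have h2 : j + 2 < m by lia.
pose r0 : 'I_2 := @Ordinal 2 0 isT.
pose r1 : 'I_2 := @Ordinal 2 1 isT.
pose a := (r0, Ordinal h1). pose b := (r1, Ordinal h1).
pose c := (r0, Ordinal h2). pose d := (r1, Ordinal h2).
have sub : forall v : 'I_2 * 'I_m, j < v.2 -> v.2 < j + 3 ->
    I_code S v \subset block 2 m j 4 :&: S.
  move=> v H1 H2; rewrite /I_code; apply: setSI; exact: nb_sub.
have inB : forall v : 'I_2 * 'I_m, j < v.2 -> v.2 < j + 3 -> v \in block 2 m j 4.
  move=> v H1 H2; rewrite inE; apply/andP; split; lia.
have key : forall u v : 'I_2 * 'I_m, j < u.2 -> u.2 < j + 3 ->
    j < v.2 -> v.2 < j + 3 -> u \notin S -> v \notin S -> u != v -> False.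
  move=> u v u1 u2 v1 v2 uS vS uv.
  move: (Hloc u v uS vS uv); rewrite (@eq_small _ _ _ _ (sub u u1 u2) (sub v v1 v2) Hc1) //.
  - by rewrite eqxx.
  - exact: Hdom.
  - exact: Hdom.
have two : forall u v : 'I_2 * 'I_m, u \in block 2 m j 4 -> v \in block 2 m j 4 ->
    u \in S -> v \in S -> u != v -> False.
  move=> u v uB vB uS vS uv.
  have : [set u; v] \subset block 2 m j 4 :&: S.
    by rewrite subUset !sub1set !in_setI uB vB uS vS.
  move/subset_leq_card; rewrite cards2 uv /= => H; move: Hc1 H; clear; move=> X Y; have := leq_trans Y X; by [].
have nab : a != b by apply/eqP => -[].
have nac : a != c by apply/eqP => -[]; lia.
have nbc : b != c by apply/eqP => -[].
case: (boolP (a \in S)) => aS; case: (boolP (b \in S)) => bS.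
- by apply: (two a b (inB a _ _) (inB b _ _) aS bS nab) => /=; lia.
- case: (boolP (c \in S)) => cS.
  + by apply: (two a c (inB a _ _) (inB c _ _) aS cS nac) => /=; lia.
  + by apply: (key b c _ _ _ _ bS cS nbc) => /=; lia.
- case: (boolP (c \in S)) => cS.
  + by apply: (two b c (inB b _ _) (inB c _ _) bS cS nbc) => /=; lia.
  + by apply: (key a c _ _ _ _ aS cS nac) => /=; lia.
- by apply: (key a b _ _ _ _ aS bS nab) => /=; lia.
Qed.
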